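(* Let $\nu: K_1 \to K_2$ be an isomorphism and $\bar{\mathcal{E}}$ be the central extension $1\to H_1\times H_2\to \bar G\xrightarrow{\beta} K_1\to 1$. Then $\ker \Delta = \tilde{M}(\nu)^{-1}(\ker \Delta_2)\cap \ker \Delta_1$, where $\Delta: \tilde{M}(K_1)\to {^M[\bar{G},\bar{G}]}$.
   Context: For a multiplicative Lie algebra $G$, ${^M[G,G]}$ denotes the ideal $(G\star G)[G,G]$, and $\mathcal{Z}(G)=LZ(G)\cap Z(G)$ (intersection of the Lie center and the group center). Let $\mathcal{E}_i \equiv 1\to H_i\xrightarrow{i} G_i\xrightarrow{\beta_i} K_i\to 1$, $i=1,2$, be two central extensions of multiplicative Lie algebras (so $H_i\subseteq\mathcal{Z}(G_i)$), and $\nu:K_1\to K_2$ a homomorphism. Let $\bar G=G_1\times_{K_2}G_2=\{(g_1,g_2): g_i\in G_i,\ \nu(\beta_1(g_1))=\beta_2(g_2)\}$, a subalgebra of $G_1\times G_2$, and $\beta(g_1,g_2)=\beta_1(g_1)$; then $\bar{\mathcal{E}}\equiv 1\to H_1\times H_2\to\bar G\xrightarrow{\beta}K_1\to 1$ is a central extension. $\tilde M(K)=\frac{{^M[F,F]}\cap R}{{^M[R,F]}}$ is the Schur multiplier (for a free presentation $1\to R\to F\to K\to1$), a covariant functor, so $\nu$ induces $\tilde M(\nu)$. For any central extension $1\to H\to G\xrightarrow{\beta}K\to1$ there is a homomorphism $\tilde M(K)\to{^M[G,G]}$ making $1\to\ker\to\tilde M(K)\to{^M[G,G]}\xrightarrow{\beta|}{^M[K,K]}\to1$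 exact; $\Delta_i:\tilde M(K_i)\to{^M[G_i,G_i]}$ and $\Delta:\tilde M(K_1)\to{^M[\bar G,\bar G]}$ denote these maps for $\mathcal{E}_i$ and $\bar{\mathcal{E}}$ respectively. *)

(* Defs.v *)
From Stdlib Require Import ProofIrrelevance.
Set Implicit Arguments.
Unset Strict Implicit.

Record MLie := {
  car :> Type;
  mmul : car -> car -> car;
  minv : car -> car;
  mone : car;
  mstar : car -> car -> car;
  m_assoc : forall x y z, mmul x (mmul y z) = mmul (mmul x y) z;
  m_mul1 : forall x, mmul mone x = x;
  m_mulx1 : forall x, mmul x mone = x;
  m_invl : forall x, mmul (minv x) x = mone;
  m_invr : forall x, mmul x (minv x) = mone;
  s_xx : forall x, mstar x x = mone;
  s_r : forall x y z,
    mstar x (mmul y z) = mmul (mstar x y) (mmul (mmul y (mstar x z)) (minv y));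
  s_l : forall x y z,
    mstar (mmul x y) z = mmul (mmul (mmul x (mstar y z)) (minv x)) (mstar x z);
  s_jac : forall x y z,
    mmul (mmul (mstar (mstar x y) (mmul (mmul y z) (minv y)))
               (mstar (mstar y z) (mmul (mmul z x) (minv z))))
         (mstar (mstar z x) (mmul (mmul x y) (minv x))) = mone;
  s_conj : forall x y z,
    mmul (mmul z (mstar x y)) (minv z)
    = mstar (mmul (mmul z x) (minv z)) (mmul (mmul z y) (minv z))
}.

Arguments mmul {m}. Arguments minv {m}. Arguments mone {m}. Arguments mstar {m}.

Definition gcomm (G : MLie) (a b : G) : G :=
  mmul (mmul (mmul a b) (minv a)) (minv b).

Definition mhom (G K : MLie) (f : G -> K) : Prop :=
  (forall x y, f (mmul x y) = mmul (f x) (f y)) /\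
  (forall x y, f (mstar x y) = mstar (f x) (f y)) /\
  f mone = mone /\ (forall x, f (minv x) = minv (f x)).

Definition surj (A B : Type) (f : A -> B) := forall b, exists a, f a = b.
Definition inj (A B : Type) (f : A -> B) := forall a a', f a = f a' -> a = a'.

Definition miso (G K : MLie) (f : G -> K) : Prop := mhom f /\ inj f /\ surj f.

(** ^M[A,B] = (A ⋆ B)[A,B] : the subgroup generated by all a⋆b and [a,b]. *)
Inductive Mcomm (G : MLie) (A B : G -> Prop) : G -> Prop :=
| mc_one : Mcomm A B mone
| mc_star a b : A a -> B b -> Mcomm A B (mstar a b)
| mc_comm a b : A a -> B b -> Mcomm A B (gcomm a b)
| mc_mul x y : Mcomm A B x -> Mcomm A B y -> Mcomm A B (mmul x y)
| mc_inv x : Mcomm A B x -> Mcomm A B (minv x).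

Definition fullset (G : MLie) : G -> Prop := fun _ => True.

Definition ZZ (G : MLie) (x : G) : Prop :=
  (forall g : G, mmul x g = mmul g x) /\ (forall g : G, mstar x g = mone).

Definition central_ext (H G K : MLie) (i : H -> G) (beta : G -> K) : Prop :=
  mhom i /\ mhom beta /\ inj i /\ surj beta /\
  (forall g, beta g = mone <-> exists h, i h = g) /\
  (forall h, ZZ (i h)).

Definition is_free (F : MLie) : Prop :=
  exists (X : Type) (iota : X -> F),
    forall (L : MLie) (f : X -> L),
      exists g : F -> L, mhom g /\ (forall x, g (iota x) = f x) /\
        (forall g' : F -> L, mhom g' -> (forall x, g' (iota x) = f x) ->
           forall y, g' y = g y).

Definition free_presentation (F K : MLie) (pi : F -> K) : Prop :=
  is_free F /\ mhom pi /\ surj pi.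

(** representatives of elements of \tilde M(K) = (^M[F,F] ∩ R)/^M[R,F] *)
Definition Mrep (F K : MLie) (pi : F -> K) (x : F) : Prop :=
  Mcomm (@fullset F) (@fullset F) x /\ pi x = mone.

Definition is_lift (F G K : MLie) (phi : F -> G) (beta : G -> K) (pi : F -> K) : Prop :=
  mhom phi /\ (forall x, beta (phi x) = pi x).

Section Fibre.
Variables (G1 G2 K1 K2 : MLie) (b1 : G1 -> K1) (b2 : G2 -> K2) (nu : K1 -> K2).
Hypotheses (hb1 : mhom b1) (hb2 : mhom b2) (hnu : mhom nu).

Definition fcar := { p : G1 * G2 | nu (b1 (fst p)) = b2 (snd p) }.

Lemma fp_mul_ok (p q : fcar) :
  nu (b1 (fst (mmul (fst (proj1_sig p)) (fst (proj1_sig q)),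
               mmul (snd (proj1_sig p)) (snd (proj1_sig q)))))
  = b2 (snd (mmul (fst (proj1_sig p)) (fst (proj1_sig q)),
               mmul (snd (proj1_sig p)) (snd (proj1_sig q)))).
Proof.
destruct p as [[a b] e], q as [[c d] f]; simpl in *.
destruct hb1 as [m1 _], hb2 as [m2 _], hnu as [m3 _].
rewrite m1, m3, m2, e, f; reflexivity.
Qed.

Definition fmul (p q : fcar) : fcar := exist _ _ (fp_mul_ok p q).

Lemma fp_star_ok (p q : fcar) :
  nu (b1 (fst (mstar (fst (proj1_sig p)) (fst (proj1_sig q)),
               mstar (snd (proj1_sig p)) (snd (proj1_sig q)))))
  = b2 (snd (mstar (fst (proj1_sig p)) (fst (proj1_sig q)),
               mstar (snd (proj1_sig p)) (snd (proj1_sig q)))).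
Proof.
destruct p as [[a b] e], q as [[c d] f]; simpl in *.
destruct hb1 as [_ [s1 _]], hb2 as [_ [s2 _]], hnu as [_ [s3 _]].
rewrite s1, s3, s2, e, f; reflexivity.
Qed.

Definition fstar (p q : fcar) : fcar := exist _ _ (fp_star_ok p q).

Lemma fp_inv_ok (p : fcar) :
  nu (b1 (fst (minv (fst (proj1_sig p)), minv (snd (proj1_sig p)))))
  = b2 (snd (minv (fst (proj1_sig p)), minv (snd (proj1_sig p)))).
Proof.
destruct p as [[a b] e]; simpl in *.
destruct hb1 as [_ [_ [_ i1]]], hb2 as [_ [_ [_ i2]]], hnu as [_ [_ [_ i3]]].
rewrite i1, i3, i2, e; reflexivity.
Qed.

Definition finv (p : fcar) : fcar := exist _ _ (fp_inv_ok p).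

Lemma fp_one_ok : nu (b1 (fst ((@mone G1), (@mone G2)))) = b2 (snd ((@mone G1), (@mone G2))).
Proof.
destruct hb1 as [_ [_ [o1 _]]], hb2 as [_ [_ [o2 _]]], hnu as [_ [_ [o3 _]]].
simpl; rewrite o1, o3, o2; reflexivity.
Qed.

Definition fone : fcar := exist _ _ fp_one_ok.

Lemma fext (p q : fcar) : proj1_sig p = proj1_sig q -> p = q.
Proof.
destruct p as [x e], q as [y f]; simpl; intros ->.
f_equal; apply proof_irrelevance.
Qed.

Ltac fpsolve :=
  repeat match goal with p : fcar |- _ => destruct p as [[? ?] ?] end;
  apply fext; simpl; f_equal.

Definition fibre_prod : MLie.
Proof.
refine (@Build_MLie fcar fmul finv fone fstar _ _ _ _ _ _ _ _ _ _);
  intros; fpsolve;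
  first [ apply m_assoc | apply m_mul1 | apply m_mulx1 | apply m_invl
        | apply m_invr | apply s_xx | apply s_r | apply s_l | apply s_jac
        | apply s_conj ].
Defined.

Definition fibre_beta (p : fibre_prod) : K1 := b1 (fst (proj1_sig (p : fcar))).

End Fibre.

(* Main.v *)
Require Import Defs.
Section S.
Variable G : MLie.
Lemma inv_uniq (a b : G) : mmul a b = mone -> b = minv a.
Proof. intro h. rewrite <- (m_mul1 b), <- (m_invl a), <- m_assoc, h, m_mulx1. reflexivity. Qed.
Lemma inv_mul (a b : G) : minv (mmul a b) = mmul (minv b) (minv a).
Proof. symmetry. apply inv_uniq. rewrite <- !m_assoc, (m_assoc b), m_invr, m_mul1, m_invr. reflexivity. Qed.
Lemma left_cancel (x a b : G) : mmul x a = mmul x b -> a = b.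
Proof. intro h. rewrite <- (m_mul1 a), <- (m_mul1 b), <- (m_invl x), <- !m_assoc, h. reflexivity. Qed.
Lemma conj_mul (x a b : G) : mmul (mmul (mmul x a) (minv x)) (mmul (mmul x b) (minv x)) = mmul (mmul x (mmul a b)) (minv x).
Proof. rewrite <- !m_assoc. rewrite (m_assoc (minv x) x), m_invl, m_mul1. reflexivity. Qed.
Lemma conj_eq1 (x a : G) : mmul (mmul x a) (minv x) = mone -> a = mone.
Proof. intro h. apply (left_cancel x). rewrite m_mulx1.
  rewrite <- (m_mulx1 (mmul x a)), <- (m_invl x), m_assoc, h, m_mul1. reflexivity. Qed.
Lemma conj1 (x : G) : mmul (mmul x mone) (minv x) = mone.
Proof. rewrite m_mulx1, m_invr. reflexivity. Qed.
Lemma star_anti (x y : G) : mmul (mstar y x) (mstar x y) = mone.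
Proof. pose proof (s_xx (mmul x y)) as h. rewrite s_l, s_r, s_r, !s_xx, conj1, m_mulx1, m_mul1, conj_mul in h.
  exact (conj_eq1 _ _ h). Qed.
Lemma star_r1 (x c : G) : mstar c x = mone -> mstar x c = mone.
Proof. intro h. pose proof (star_anti x c) as e. rewrite h, m_mul1 in e. exact e. Qed.
Lemma gcomm_l (x c z : G) : ZZ c -> gcomm (mmul x c) z = gcomm x z.
Proof. intros [hc _]. unfold gcomm. rewrite inv_mul. rewrite <- !m_assoc, (m_assoc c z), hc.
  rewrite <- !m_assoc, (m_assoc c (minv c)), m_invr, m_mul1. reflexivity. Qed.
Lemma gcomm_r (x c z : G) : ZZ c -> gcomm z (mmul x c) = gcomm z x.
Proof. intros [hc _]. unfold gcomm. rewrite inv_mul. rewrite <- !m_assoc.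
  rewrite (m_assoc c (minv z)), hc, <- !m_assoc, (m_assoc c (minv c)), m_invr, m_mul1. reflexivity. Qed.
Lemma star_lc (x c z : G) : ZZ c -> mstar (mmul x c) z = mstar x z.
Proof. intros [_ hc]. rewrite s_l, hc, conj1, m_mul1. reflexivity. Qed.
Lemma star_rc (x c z : G) : ZZ c -> mstar z (mmul x c) = mstar z x.
Proof. intros [_ hc]. rewrite s_r, (star_r1 _ _ (hc z)). rewrite conj1, m_mulx1. reflexivity. Qed.
End S.

Lemma lifts_agree (H G K F : MLie) (i : H -> G) (beta : G -> K) (E : central_ext i beta)
  (pi : F -> K) (phi phi' : F -> G) (h1 : is_lift phi beta pi) (h2 : is_lift phi' beta pi) :
  forall x, Mcomm (@fullset F) (@fullset F) x -> phi x = phi' x.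
Proof.
  destruct E as [_ [[bm [_ [b1 bi]]] [_ [_ [ker zz]]]]].
  destruct h1 as [[pm [ps [p1 pi']]] l1], h2 as [[qm [qs [q1 qi]]] l2].
  assert (dec : forall a, exists c, ZZ c /\ phi' a = mmul (phi a) c).
  { intro a. exists (mmul (minv (phi a)) (phi' a)). split.
    - destruct (proj1 (ker (mmul (minv (phi a)) (phi' a)))) as [h <-]. rewrite bm, bi, l1, l2, m_invl. reflexivity. apply zz.
    - rewrite m_assoc, m_invr, m_mul1. reflexivity. }
  induction 1.
  - rewrite p1, q1; reflexivity.
  - rewrite ps, qs. destruct (dec a) as [c [hc ->]]. destruct (dec b) as [e [he ->]].
    rewrite star_lc, star_rc by assumption. reflexivity.
  - unfold gcomm. rewrite !pm, !qm, !pi', !qi. fold (gcomm (phi a) (phi b)). fold (gcomm (phi' a) (phi' b)).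
    destruct (dec a) as [c [hc ->]]. destruct (dec b) as [e [he ->]].
    rewrite gcomm_l, gcomm_r by assumption. reflexivity.
  - rewrite pm, qm, IHMcomm1, IHMcomm2. reflexivity.
  - rewrite pi', qi, IHMcomm. reflexivity.
Qed.
Theorem lemma4p17
  (H1 G1 K1 H2 G2 K2 : MLie)
  (i1 : H1 -> G1) (b1 : G1 -> K1) (i2 : H2 -> G2) (b2 : G2 -> K2)
  (E1 : central_ext i1 b1) (E2 : central_ext i2 b2)
  (nu : K1 -> K2) (hnu : miso nu)
  (hb1 : mhom b1) (hb2 : mhom b2) (hnuh : mhom nu)
  (F1 F2 : MLie) (p1 : F1 -> K1) (p2 : F2 -> K2)
  (P1 : free_presentation p1) (P2 : free_presentation p2)
  (* lift defining Delta_1 : \tilde M(K_1) -> ^M[G_1,G_1] *)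
  (d1 : F1 -> G1) (hd1 : is_lift d1 b1 p1)
  (* lift defining Delta_2 : \tilde M(K_2) -> ^M[G_2,G_2] *)
  (d2 : F2 -> G2) (hd2 : is_lift d2 b2 p2)
  (* lift of nu \o p1 defining \tilde M(nu) *)
  (mu : F1 -> F2) (hmu : is_lift mu p2 (fun x => nu (p1 x)))
  (* lift defining Delta : \tilde M(K_1) -> ^M[Gbar,Gbar] *)
  (d : F1 -> fibre_prod hb1 hb2 hnuh)
  (hd : is_lift d (fibre_beta (hb1:=hb1) (hb2:=hb2) (hnu:=hnuh)) p1) :
  forall x : F1, Mrep p1 x ->
    (d x = mone <-> (d2 (mu x) = mone /\ d1 x = mone)).
Proof.
  intros x [hx _].
  destruct hd as [[dm [ds [d1' di]]] dl].
  set (A := fun y => fst (proj1_sig (d y))).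
  set (B := fun y => snd (proj1_sig (d y))).
  assert (LA : is_lift A b1 p1).
  { split; [split; [|split; [|split]]|].
    - intros y z. unfold A. rewrite dm. reflexivity.
    - intros y z. unfold A. rewrite ds. reflexivity.
    - unfold A. rewrite d1'. reflexivity.
    - intros y. unfold A. rewrite di. reflexivity.
    - intros y. unfold A. rewrite <- dl. reflexivity. }
  assert (LB : is_lift B b2 (fun y => nu (p1 y))).
  { split; [split; [|split; [|split]]|].
    - intros y z. unfold B. rewrite dm. reflexivity.
    - intros y z. unfold B. rewrite ds. reflexivity.
    - unfold B. rewrite d1'. reflexivity.
    - intros y. unfold B. rewrite di. reflexivity.
    - intros y. unfold B. rewrite <- dl. unfold fibre_beta.
      destruct (d y) as [p e]. simpl. symmetry. exact e. }
  assert (LC : is_lift (fun y => d2 (mu y)) b2 (fun y => nu (p1 y))).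
  { destruct hd2 as [[em [es [e1 ei]]] el]. destruct hmu as [[fm [fs [f1 fi]]] fl].
    split; [split; [|split; [|split]]|].
    - intros y z. rewrite fm, em. reflexivity.
    - intros y z. rewrite fs, es. reflexivity.
    - rewrite f1, e1. reflexivity.
    - intros y. rewrite fi, ei. reflexivity.
    - intros y. rewrite el, fl. reflexivity. }
  assert (EA : A x = d1 x) by exact (@lifts_agree _ _ _ _ _ _ E1 _ _ _ LA hd1 x hx).
  assert (EB : B x = d2 (mu x)) by exact (@lifts_agree _ _ _ _ _ _ E2 _ _ _ LB LC x hx).
  rewrite <- EA, <- EB. unfold A, B.
  split.
  - intros ->. simpl. split; reflexivity.
  - intros [h2 h1]. apply fext. destruct (d x) as [[u v] e]. simpl in *. subst. reflexivity.
Qed.
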